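(* Let $X\subseteq Y$ with $|Y\setminus X|\ge|X|$. Then $\tau_{pp}$ is the only Hausdorff topology $\tau$ on $I(X)$ making $I(X)$ a topological inverse semigroup for which the map $\pi:S_\infty(Y)\to(I(X),\tau)$, $\pi(f)=\widehat f$, is continuous (with $S_\infty(Y)$ carrying the pointwise convergence topology, $Y$ discrete).
   Context: $S_\infty(Y)$ is the group of all bijections $Y\to Y$. $I(X)$ is the set of all bijections $f:A\to B$ with $A,B\subseteq X$ (including the empty map), $\mathrm{dom}(f)=A$, $\mathrm{im}(f)=B$, with composition $\mathrm{dom}(f\circ g)=g^{-1}(\mathrm{dom}(f)\cap\mathrm{im}(g))$ and inversion $f\mapsto f^{-1}$. For $f\in S_\infty(Y)$, $\widehat f$ is the restriction of $f$ to $X\cap f^{-1}(X)$. For $x,y\in X$: $v(x,y)=\{f: x\in\mathrm{dom}(f), f(x)=y\}$, $w_1(x)=\{f: x\notin\mathrm{dom}(f)\}$, $w_2(y)=\{f: y\notin\mathrm{im}(f)\}$; $\tau_{pp}$ is the topology generated by all these sets. A topological inverse semigroup has continuous multiplication and inversion. *)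

(* Defs.v *)
From Stdlib Require Import Classical ClassicalEpsilon.
Set Implicit Arguments.

Definition set (T : Type) := T -> Prop.

Section Top.
Variable T : Type.

Definition is_topology (O : set (set T)) : Prop :=
  O (fun _ => True) /\
  (forall F : set (set T), (forall U, F U -> O U) ->
      O (fun x => exists U, F U /\ U x)) /\
  (forall U V, O U -> O V -> O (fun x => U x /\ V x)).

Definition generated_topology (S : set (set T)) : set (set T) :=
  fun U => forall O, is_topology O -> (forall V, S V -> O V) -> O U.

Definition hausdorff (O : set (set T)) : Prop :=
  forall x y, x <> y -> exists U V, O U /\ O V /\ U x /\ V y /\
    (forall z, U z -> V z -> False).
End Top.

Definition continuous {A B : Type} (OA : set (set A)) (OB : set (set B))
  (f : A -> B) : Prop :=
  forall V, OB V -> OA (fun a => V (f a)).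

Definition product_topology {A B : Type} (OA : set (set A)) (OB : set (set B))
  : set (set (A * B)) :=
  generated_topology (fun W => exists U V, OA U /\ OB V /\
    (forall p, W p <-> (U (fst p) /\ V (snd p)))).

Section IX.
Variable Y : Type.
Variable X : set Y.

(** A partial map [f] on Y (domain = {a | f a <> None}) is an element of I(X):
    a bijection between its domain and its image, both subsets of X. *)
Definition is_pbij (f : Y -> option Y) : Prop :=
  (forall a b, f a = Some b -> X a /\ X b) /\
  (forall a a' b, f a = Some b -> f a' = Some b -> a = a').

Definition IX := {f : Y -> option Y | is_pbij f}.

(** composition f∘g : first g, then f; dom = g^{-1}(dom f ∩ im g) *)
Definition pcomp_fun (f g : Y -> option Y) : Y -> option Y :=
  fun a => match g a with Some b => f b | None => None end.

Lemma pcomp_pbij f g : is_pbij f -> is_pbij g -> is_pbij (pcomp_fun f g).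
Proof.
  intros [Hf1 Hf2] [Hg1 Hg2]; unfold pcomp_fun; split.
  - intros a b H; destruct (g a) as [c|] eqn:E; [|discriminate].
    split; [exact (proj1 (Hg1 _ _ E)) | exact (proj2 (Hf1 _ _ H))].
  - intros a a' b H H'.
    destruct (g a) as [c|] eqn:E; [|discriminate].
    destruct (g a') as [c'|] eqn:E'; [|discriminate].
    assert (c = c') by (exact (Hf2 _ _ _ H H')); subst c'.
    exact (Hg2 _ _ _ E E').
Qed.

Definition pmul (f g : IX) : IX :=
  exist _ (pcomp_fun (proj1_sig f) (proj1_sig g))
    (pcomp_pbij (proj2_sig f) (proj2_sig g)).

Definition pinv_fun (f : Y -> option Y) (b : Y) : option Y :=
  match excluded_middle_informative (exists a, f a = Some b) with
  | left H => Some (proj1_sig (constructive_indefinite_description _ H))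
  | right _ => None
  end.

Lemma pinv_fun_spec f a b : pinv_fun f b = Some a -> f a = Some b.
Proof.
  unfold pinv_fun.
  destruct (excluded_middle_informative _) as [H|H]; [|discriminate].
  destruct (constructive_indefinite_description _ H) as [c Hc]; simpl.
  intros E; injection E; intros; subst; exact Hc.
Qed.

Lemma pinv_pbij f : is_pbij f -> is_pbij (pinv_fun f).
Proof.
  intros [H1 H2]; split.
  - intros a b H; apply pinv_fun_spec in H; destruct (H1 _ _ H); split; auto.
  - intros a a' b H H'; apply pinv_fun_spec in H; apply pinv_fun_spec in H'.
    congruence.
Qed.

Definition pinv (f : IX) : IX :=
  exist _ (pinv_fun (proj1_sig f)) (pinv_pbij (proj2_sig f)).

Definition topological_inverse_semigroup (tau : set (set IX)) : Prop :=
  continuous (product_topology tau tau) tau (fun p => pmul (fst p) (snd p)) /\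
  continuous tau tau pinv.

Definition v_set (x y : Y) : set IX := fun f => proj1_sig f x = Some y.
Definition w1_set (x : Y) : set IX := fun f => proj1_sig f x = None.
Definition w2_set (y : Y) : set IX := fun f => forall a, proj1_sig f a <> Some y.

Definition tau_pp : set (set IX) :=
  generated_topology (fun U =>
    (exists x y, X x /\ X y /\ U = v_set x y) \/
    (exists x, X x /\ U = w1_set x) \/
    (exists y, X y /\ U = w2_set y)).
End IX.

Record perm (Y : Type) := Perm {
  pfun : Y -> Y;
  pinvfun : Y -> Y;
  pfunK : forall y, pinvfun (pfun y) = y;
  pinvfunK : forall y, pfun (pinvfun y) = y }.

(** pointwise convergence topology, Y discrete: subbase {f | f y = z} *)
Definition pointwise_top (Y : Type) : set (set (perm Y)) :=
  generated_topology (fun U => exists y z, forall s, U s <-> pfun s y = z).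

Definition hat_fun (Y : Type) (X : set Y) (s : perm Y) : Y -> option Y :=
  fun a => if excluded_middle_informative (X a /\ X (pfun s a))
           then Some (pfun s a) else None.

Lemma hat_pbij (Y : Type) (X : set Y) (s : perm Y) : is_pbij X (hat_fun X s).
Proof.
  unfold hat_fun; split.
  - intros a b; destruct (excluded_middle_informative _) as [[H1 H2]|H];
      [|discriminate].
    intros E; injection E; intros; subst; auto.
  - intros a a' b.
    destruct (excluded_middle_informative (X a /\ _)); [|discriminate].
    destruct (excluded_middle_informative (X a' /\ _)); [|discriminate].
    intros E E'; injection E; injection E'; intros; subst.
    rewrite <- (pfunK s a), <- (pfunK s a'); congruence.
Qed.

Definition hat (Y : Type) (X : set Y) (s : perm Y) : IX X :=
  exist _ (hat_fun X s) (hat_pbij X s).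

(** |X| <= |Y \ X| : an injection from X into Y \ X *)
Definition card_le_compl (Y : Type) (X : set Y) : Prop :=
  exists h : Y -> Y, (forall x, X x -> ~ X (h x)) /\
    (forall x x', X x -> X x' -> h x = h x' -> x = x').

Arguments tau_pp {Y} X.
Arguments v_set {Y} X x y.
Arguments w1_set {Y} X x.
Arguments w2_set {Y} X y.

(* Main.v *)
Require Import Defs.
From Stdlib Require Import Classical ClassicalEpsilon FunctionalExtensionality PropExtensionality.

Lemma set_ext {T : Type} (U V : set T) : (forall x, U x <-> V x) -> U = V.
Proof. intros H; apply functional_extensionality; intros x;
  apply propositional_extensionality; auto. Qed.

Lemma open_ext {T : Type} (O : set (set T)) (U V : set T) :
  O U -> (forall x, U x <-> V x) -> O V.
Proof. intros H E; rewrite <- (set_ext U V E); exact H. Qed.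

Lemma open_full {T : Type} (O : set (set T)) : is_topology O -> O (fun _ => True).
Proof. intros [H _]; exact H. Qed.

Lemma open_empty {T : Type} (O : set (set T)) : is_topology O -> O (fun _ => False).
Proof. intros [_ [H _]].
  apply (open_ext O (fun x => exists U, (fun _ : set T => False) U /\ U x)).
  - apply H; intros U []. 
  - intros x; split; [intros [U [[] _]] | intros []]. Qed.

Lemma open_inter {T : Type} (O : set (set T)) U V : is_topology O -> O U -> O V ->
  O (fun x => U x /\ V x).
Proof. intros [_ [_ H]]; apply H. Qed.

Lemma open_union_idx {T I : Type} (O : set (set T)) (P : I -> Prop) (W : I -> set T) :
  is_topology O -> (forall i, P i -> O (W i)) -> O (fun t => exists i, P i /\ W i t).
Proof. intros [_ [H _]] HW.
  apply (open_ext O (fun t => exists U, (fun U => exists i, P i /\ U = W i) U /\ U t)).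
  - apply H; intros U [i [Pi ->]]; auto.
  - intros t; split.
    + intros [U [[i [Pi ->]] Ht]]; eauto.
    + intros [i [Pi Ht]]; exists (W i); eauto. Qed.

Lemma open_union2 {T : Type} (O : set (set T)) U V : is_topology O -> O U -> O V ->
  O (fun x => U x \/ V x).
Proof. intros Ht HU HV.
  apply (open_ext O (fun t => exists b : bool, True /\ (if b then U else V) t)).
  - apply open_union_idx; auto; intros [|] _; auto.
  - intros t; split.
    + intros [[|] [_ H]]; auto.
    + intros [H|H]; [exists true | exists false]; auto. Qed.

Lemma open_decide {T : Type} (O : set (set T)) (Q : Prop) : is_topology O ->
  O (fun _ => Q).
Proof. intros Ht; destruct (classic Q) as [q|q].
  - apply (open_ext O _ _ (open_full O Ht)); intuition.
  - apply (open_ext O _ _ (open_empty O Ht)); intuition. Qed.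

Lemma gen_top {T : Type} (S : set (set T)) : is_topology (generated_topology S).
Proof. split; [|split].
  - intros O HO _; apply open_full; auto.
  - intros F HF O HO HS. destruct HO as [A [B C]]. apply B. intros U HU. exact (HF U HU O (conj A (conj B C)) HS).
  - intros U V HU HV O HO HS. apply open_inter; [exact HO|exact (HU O HO HS)|exact (HV O HO HS)]. Qed.

Lemma gen_sub {T : Type} (S : set (set T)) V : S V -> generated_topology S V.
Proof. intros H O _ HS; auto. Qed.

Lemma cont_gen {A B : Type} (OA : set (set A)) (S : set (set B)) (f : A -> B) :
  is_topology OA -> (forall V, S V -> OA (fun a => V (f a))) ->
  continuous OA (generated_topology S) f.
Proof. intros Ht HS V HV. apply HV; auto. split; [|split].
  - apply open_full; auto.
  - intros F HF.
    apply (open_ext OA (fun a => exists i, F i /\ i (f a))); [|tauto].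
    apply (open_union_idx OA F (fun i a => i (f a))); auto.
  - intros U W HU HW; apply open_inter; auto. Qed.

Lemma rect_open {A B : Type} (OA : set (set A)) (OB : set (set B)) U V :
  OA U -> OB V -> product_topology OA OB (fun p => U (fst p) /\ V (snd p)).
Proof. intros HU HV; apply gen_sub; exists U, V; repeat split; tauto. Qed.

Lemma IX_eq {Y : Type} {X : set Y} (f g : IX X) : (forall a, proj1_sig f a = proj1_sig g a) -> f = g.
Proof. destruct f as [f pf], g as [g pg]; simpl; intros H.
  assert (f = g) by (apply functional_extensionality; auto). subst g.
  f_equal; apply proof_irrelevance. Qed.

Lemma pinv_some {Y : Type} {X : set Y} f a b : is_pbij X f ->
  (pinv_fun f b = Some a <-> f a = Some b).
Proof. intros [H1 H2]; split; [apply pinv_fun_spec|].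
  intros E; unfold pinv_fun.
  destruct (excluded_middle_informative _) as [H|H].
  - destruct (constructive_indefinite_description _ H) as [c Hc]; simpl.
    f_equal; eapply H2; eauto.
  - exfalso; apply H; eauto. Qed.

Lemma pinv_none {Y : Type} (f : Y -> option Y) b :
  (pinv_fun f b = None <-> forall a, f a <> Some b).
Proof. unfold pinv_fun; destruct (excluded_middle_informative _) as [H|H]; split.
  - discriminate.
  - intros K; destruct H as [a Ha]; destruct (K a Ha).
  - intros _ a Ha; apply H; eauto.
  - auto. Qed.


Lemma tpp_top {Y} (X : set Y) : is_topology (tau_pp X).
Proof. apply gen_top. Qed.
Lemma tpp_v {Y} (X : set Y) x y : X x -> X y -> tau_pp X (v_set X x y).
Proof. intros; apply gen_sub; left; eauto. Qed.
Lemma tpp_w1 {Y} (X : set Y) x : X x -> tau_pp X (w1_set X x).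
Proof. intros; apply gen_sub; right; left; eauto. Qed.
Lemma tpp_w2 {Y} (X : set Y) x : X x -> tau_pp X (w2_set X x).
Proof. intros; apply gen_sub; right; right; eauto. Qed.

Lemma tpp_mul {Y} (X : set Y) :
  continuous (product_topology (tau_pp X) (tau_pp X)) (tau_pp X) (fun p => pmul (fst p) (snd p)).
Proof.
  pose proof (tpp_top X) as T. pose proof (gen_top (T:=IX X * IX X)) as PT.
  apply cont_gen; [apply gen_top|].
  intros V [[x [y [Hx [Hy ->]]]] | [[x [Hx ->]] | [y [Hy ->]]]].
  - apply (open_ext _ (fun p => exists z, X z /\ (v_set X z y (fst p) /\ v_set X x z (snd p)))).
    + apply open_union_idx; [apply gen_top|]. intros z Hz; apply rect_open; apply tpp_v; auto.
    + intros [f g]; unfold v_set; simpl; unfold pcomp_fun; split.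
      * intros [z [Hz [E1 E2]]]; rewrite E2; auto.
      * destruct (proj1_sig g x) as [z|] eqn:E; [|discriminate].
        intros E'; exists z; split; auto.
        exact (proj2 (proj1 (proj2_sig g) _ _ E)).
  - apply (open_ext _ (fun p => w1_set X x (snd p) \/
       exists z, X z /\ (w1_set X z (fst p) /\ v_set X x z (snd p)))).
    + apply open_union2; [apply gen_top| |].
      * apply (open_ext _ _ _ (rect_open (tau_pp X) (tau_pp X) _ _ (open_full _ T) (tpp_w1 X x Hx))).
        tauto.
      * apply open_union_idx; [apply gen_top|]. intros z Hz; apply rect_open; [apply tpp_w1|apply tpp_v]; auto.
    + intros [f g]; unfold v_set, w1_set; simpl; unfold pcomp_fun; split.
      * intros [E|[z [Hz [E1 E2]]]]; [rewrite E; auto| rewrite E2; auto].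
      * destruct (proj1_sig g x) as [z|] eqn:E; [|auto].
        intros E'; right; exists z; split; auto.
        exact (proj2 (proj1 (proj2_sig g) _ _ E)).
  - apply (open_ext _ (fun p => w2_set X y (fst p) \/
       exists z, X z /\ (v_set X z y (fst p) /\ w2_set X z (snd p)))).
    + apply open_union2; [apply gen_top| |].
      * apply (open_ext _ _ _ (rect_open (tau_pp X) (tau_pp X) _ _ (tpp_w2 X y Hy) (open_full _ T))).
        tauto.
      * apply open_union_idx; [apply gen_top|]. intros z Hz; apply rect_open; [apply tpp_v|apply tpp_w2]; auto.
    + intros [f g]; unfold v_set, w2_set; simpl; unfold pcomp_fun; split.
      * intros [E|[z [Hz [E1 E2]]]] a.
        -- destruct (proj1_sig g a) as [b|]; [apply E|discriminate].
        -- destruct (proj1_sig g a) as [b|] eqn:Eb; [|discriminate].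
           intros E3. assert (b = z) by exact (proj2 (proj2_sig f) _ _ _ E3 E1).
           subst b; exact (E2 a Eb).
      * intros K. destruct (classic (exists z, proj1_sig f z = Some y)) as [[z Hz]|N].
        -- right; exists z; split; [exact (proj1 (proj1 (proj2_sig f) _ _ Hz))|split; auto].
           intros a Ea. apply (K a). rewrite Ea; auto.
        -- left; intros a Ea; apply N; eauto.
Qed.

Lemma tpp_inv {Y} (X : set Y) : continuous (tau_pp X) (tau_pp X) (@pinv Y X).
Proof.
  apply cont_gen; [apply gen_top|].
  intros V [[x [y [Hx [Hy ->]]]] | [[x [Hx ->]] | [y [Hy ->]]]].
  - apply (open_ext _ _ _ (tpp_v X y x Hy Hx)). intros f; unfold v_set; simpl.
    rewrite (pinv_some _ _ _ (proj2_sig f)); tauto.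
  - apply (open_ext _ _ _ (tpp_w2 X x Hx)). intros f; unfold w1_set, w2_set; simpl.
    rewrite pinv_none; tauto.
  - apply (open_ext _ _ _ (tpp_w1 X y Hy)). intros f; unfold w1_set, w2_set; simpl.
    split.
    + intros E a Ea. apply (pinv_some _ _ _ (proj2_sig f)) in Ea. congruence.
    + intros K. destruct (proj1_sig f y) as [b|] eqn:E; auto.
      exfalso; apply (K b). apply (pinv_some _ _ _ (proj2_sig f)); auto.
Qed.

Lemma tpp_haus {Y} (X : set Y) : hausdorff (tau_pp X).
Proof.
  intros f g Hfg.
  destruct (classic (exists x, proj1_sig f x <> proj1_sig g x)) as [[x Hx]|N].
  2:{ exfalso; apply Hfg, IX_eq; intros a; apply NNPP; intros K; apply N; eauto. }
  destruct (proj1_sig f x) as [y|] eqn:Ef; destruct (proj1_sig g x) as [y'|] eqn:Eg.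
  - destruct (proj1 (proj2_sig f) _ _ Ef) as [Xx Xy].
    destruct (proj1 (proj2_sig g) _ _ Eg) as [_ Xy'].
    exists (v_set X x y), (v_set X x y'); refine (conj (tpp_v X x y Xx Xy) (conj (tpp_v X x y' Xx Xy') (conj Ef (conj Eg _)))).
    unfold v_set; intros z E1 E2; rewrite E1 in E2; congruence.
  - destruct (proj1 (proj2_sig f) _ _ Ef) as [Xx Xy].
    exists (v_set X x y), (w1_set X x); refine (conj (tpp_v X x y Xx Xy) (conj (tpp_w1 X x Xx) (conj Ef (conj Eg _)))).
    unfold v_set, w1_set; intros z E1 E2; congruence.
  - destruct (proj1 (proj2_sig g) _ _ Eg) as [Xx Xy].
    exists (w1_set X x), (v_set X x y'); refine (conj (tpp_w1 X x Xx) (conj (tpp_v X x y' Xx Xy) (conj Ef (conj Eg _)))).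
    unfold v_set, w1_set; intros z E1 E2; congruence.
  - congruence.
Qed.

Lemma hat_cont {Y} (X : set Y) : continuous (@pointwise_top Y) (tau_pp X) (hat X).
Proof.
  assert (T : is_topology (@pointwise_top Y)) by apply gen_top.
  apply cont_gen; auto.
  intros V [[x [y [Hx [Hy ->]]]] | [[x [Hx ->]] | [y [Hy ->]]]].
  - apply (open_ext _ (fun s => pfun s x = y)).
    + apply gen_sub; exists x, y; tauto.
    + intros s; unfold v_set, hat, hat_fun; simpl.
      destruct (excluded_middle_informative _) as [[H1 H2]|H]; split; intros E.
      * congruence.
      * congruence.
      * subst; exfalso; auto.
      * discriminate.
  - apply (open_ext _ (fun s => exists z, ~ X z /\ (fun s => pfun s x = z) s)).
    + apply open_union_idx; auto. intros z _; apply gen_sub; exists x, z; tauto.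
    + intros s; unfold w1_set, hat, hat_fun; simpl.
      split.
      * intros [z [Hz E]]; destruct (excluded_middle_informative _) as [[H1 H2]|H]; auto.
        subst; contradiction.
      * destruct (excluded_middle_informative _) as [[H1 H2]|H]; [discriminate|].
        intros _; exists (pfun s x); split; auto.
  - apply (open_ext _ (fun s => exists a, ~ X a /\ (fun s => pfun s a = y) s)).
    + apply open_union_idx; auto. intros z _; apply gen_sub; exists z, y; tauto.
    + intros s; unfold w2_set, hat, hat_fun; simpl. split.
      * intros [a [Ha E]] a'.
        destruct (excluded_middle_informative _) as [[H1 H2]|H]; [|discriminate].
        intros E'; injection E'; intros E2.
        assert (a = a') by (rewrite <- (pfunK s a), <- (pfunK s a'); congruence).
        subst; contradiction.
      * intros K. exists (pinvfun s y); split; [|apply pinvfunK].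
        intros Ha. apply (K (pinvfun s y)).
        destruct (excluded_middle_informative _) as [[H1 H2]|H].
        -- rewrite pinvfunK; auto.
        -- exfalso; apply H; rewrite pinvfunK; auto.
Qed.

Lemma cont_const {A B : Type} (OA : set (set A)) (OB : set (set B)) (c : B) :
  is_topology OA -> continuous OA OB (fun _ => c).
Proof. intros T V _; apply open_decide; auto. Qed.

Lemma cont_mul2 {Y} (X : set Y) (tau : set (set (IX X))) (p q : IX X -> IX X) :
  is_topology tau -> topological_inverse_semigroup tau ->
  continuous tau tau p -> continuous tau tau q ->
  continuous tau tau (fun a => pmul (p a) (q a)).
Proof.
  intros T [Hm _] Hp Hq V HV.
  assert (Hpair : continuous tau (product_topology tau tau) (fun a => (p a, q a))).
  { apply cont_gen; auto. intros W [U [U' [HU [HU' E]]]].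
    apply (open_ext _ _ _ (open_inter _ _ _ T (Hp U HU) (Hq U' HU'))).
    intros a; rewrite E; simpl; tauto. }
  exact (Hpair _ (Hm V HV)).
Qed.

Lemma cont_inv2 {Y} (X : set Y) (tau : set (set (IX X))) (p : IX X -> IX X) :
  topological_inverse_semigroup tau -> continuous tau tau p ->
  continuous tau tau (fun a => pinv (p a)).
Proof. intros [_ Hi] Hp V HV. exact (Hp _ (Hi V HV)). Qed.

Lemma cont_id {A} (O : set (set A)) : continuous O O (fun a => a).
Proof. intros V HV; exact HV. Qed.

Lemma test_open {T} (tau : set (set T)) (phi : T -> T) (P Q : T) (R : T -> Prop) :
  is_topology tau -> hausdorff tau -> continuous tau tau phi -> P <> Q ->
  (forall f, R f -> phi f = P) -> (forall f, ~ R f -> phi f = Q) -> tau R.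
Proof.
  intros Tt H Hc PQ H1 H2.
  destruct (H P Q PQ) as [U [V [HU [HV [UP [VQ D]]]]]].
  apply (open_ext _ _ _ (Hc U HU)). intros f; split.
  - intros Uf. apply NNPP; intros N. rewrite (H2 f N) in Uf. exact (D Q Uf VQ).
  - intros Rf; rewrite (H1 f Rf); auto.
Qed.

Definition pt_fun {Y} (x y : Y) : Y -> option Y :=
  fun a => if excluded_middle_informative (a = x) then Some y else None.
Lemma pt_pbij {Y} (X : set Y) x y : X x -> X y -> is_pbij X (pt_fun x y).
Proof. intros Hx Hy; unfold pt_fun; split.
  - intros a b; destruct (excluded_middle_informative _); [|discriminate].
    intros E; injection E; intros; subst; auto.
  - intros a a' b; destruct (excluded_middle_informative (a = x)); [|discriminate].
    destruct (excluded_middle_informative (a' = x)); [|discriminate]. congruence. Qed.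
Definition pt {Y} (X : set Y) x y (Hx : X x) (Hy : X y) : IX X :=
  exist _ (pt_fun x y) (pt_pbij X x y Hx Hy).
Lemma zero_pbij {Y} (X : set Y) : is_pbij X (fun _ => None).
Proof. split; intros; discriminate. Qed.
Definition zero {Y} (X : set Y) : IX X := exist _ (fun _ => None) (zero_pbij X).

Lemma pt_neq {Y} (X : set Y) x y Hx Hy : pt X x y Hx Hy <> zero X.
Proof. intros E. assert (E' := f_equal (fun f => proj1_sig f x) E). simpl in E'.
  unfold pt_fun in E'; destruct (excluded_middle_informative (x = x)); [discriminate|auto]. Qed.

Lemma dirA {Y} (X : set Y) (tau : set (set (IX X))) :
  is_topology tau -> hausdorff tau -> topological_inverse_semigroup tau ->
  forall U, tau_pp X U -> tau U.
Proof.
  intros T H TIS U HU; apply HU; auto.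
  intros V [[x [y [Hx [Hy ->]]]] | [[x [Hx ->]] | [y [Hy ->]]]].
  - apply (test_open tau (fun f => pmul (pt X y y Hy Hy) (pmul f (pt X x x Hx Hx)))
             (pt X x y Hx Hy) (zero X)); auto.
    + apply cont_mul2; auto. apply cont_const; auto.
      apply cont_mul2; auto. apply cont_id. apply cont_const; auto.
    + apply pt_neq.
    + intros f E; apply IX_eq; intros a; unfold v_set in E; simpl; unfold pcomp_fun, pt_fun.
      destruct (excluded_middle_informative (a = x)) as [->|n]; auto.
      rewrite E. destruct (excluded_middle_informative (y = y)); tauto.
    + intros f E; apply IX_eq; intros a; unfold v_set in E; simpl; unfold pcomp_fun, pt_fun.
      destruct (excluded_middle_informative (a = x)) as [->|n]; auto.
      destruct (proj1_sig f x) as [c|]; auto.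
      destruct (excluded_middle_informative (c = y)); subst; tauto.
  - apply (test_open tau (fun f => pmul (pinv f) (pmul f (pt X x x Hx Hx)))
             (zero X) (pt X x x Hx Hx)); auto.
    + apply cont_mul2; auto. apply cont_inv2; auto. apply cont_id.
      apply cont_mul2; auto. apply cont_id. apply cont_const; auto.
    + intros E; symmetry in E; exact (pt_neq _ _ _ _ _ E).
    + intros f E; apply IX_eq; intros a; unfold w1_set in E; simpl; unfold pcomp_fun, pt_fun.
      destruct (excluded_middle_informative (a = x)) as [->|n]; auto.
      rewrite E; auto.
    + intros f E; apply IX_eq; intros a; unfold w1_set in E; simpl; unfold pcomp_fun, pt_fun.
      destruct (excluded_middle_informative (a = x)) as [->|n]; auto.
      destruct (proj1_sig f x) as [c|] eqn:Ec; [|tauto].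
      apply (pinv_some _ _ _ (proj2_sig f)); auto.
  - apply (test_open tau (fun f => pmul (pt X y y Hy Hy) (pmul f (pinv f)))
             (zero X) (pt X y y Hy Hy)); auto.
    + apply cont_mul2; auto. apply cont_const; auto.
      apply cont_mul2; auto. apply cont_id. apply cont_inv2; auto. apply cont_id.
    + intros E; symmetry in E; exact (pt_neq _ _ _ _ _ E).
    + intros f E; apply IX_eq; intros a; unfold w2_set in E; simpl; unfold pcomp_fun, pt_fun.
      destruct (pinv_fun (proj1_sig f) a) as [b|] eqn:Eb; auto.
      apply (pinv_some _ _ _ (proj2_sig f)) in Eb. rewrite Eb.
      destruct (excluded_middle_informative (a = y)) as [->|n]; auto.
      exfalso; exact (E b Eb).
    + intros f E; apply IX_eq; intros a; unfold w2_set in E; simpl; unfold pcomp_fun, pt_fun.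
      destruct (pinv_fun (proj1_sig f) a) as [b|] eqn:Eb.
      * apply (pinv_some _ _ _ (proj2_sig f)) in Eb. rewrite Eb. reflexivity.
      * destruct (excluded_middle_informative (a = y)) as [->|n]; auto.
        exfalso; apply E; intros b Hb. rewrite pinv_none in Eb. exact (Eb b Hb).
Qed.

Definition hX {Y} (X : set Y) (h : Y -> Y) (a : Y) : option Y :=
  match excluded_middle_informative (exists b, X b /\ h b = a) with
  | left H => Some (proj1_sig (constructive_indefinite_description _ H))
  | right _ => None end.

Lemma hX_some {Y} (X : set Y) h a b : hX X h a = Some b -> X b /\ h b = a.
Proof. unfold hX; destruct (excluded_middle_informative _) as [H|H]; [|discriminate].
  destruct (constructive_indefinite_description _ H) as [c Hc]; simpl.
  intros E; injection E; intros; subst; auto. Qed.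

Lemma hX_none {Y} (X : set Y) h a : hX X h a = None -> forall b, X b -> h b <> a.
Proof. unfold hX; destruct (excluded_middle_informative _) as [H|H]; [discriminate|].
  intros _ b Hb E; apply H; eauto. Qed.

Lemma hX_h {Y} (X : set Y) h (Hh2 : forall x x', X x -> X x' -> h x = h x' -> x = x') b :
  X b -> hX X h (h b) = Some b.
Proof. intros Hb. destruct (hX X h (h b)) as [c|] eqn:E.
  - apply hX_some in E; destruct E as [Hc E]. f_equal; apply Hh2; auto.
  - exfalso; exact (hX_none X h _ E b Hb eq_refl). Qed.

Definition S_fun {Y} (X : set Y) (h : Y -> Y) (g g' : Y -> option Y) (a : Y) : Y :=
  if excluded_middle_informative (X a) then
    match g a with Some b => b | None => h a end
  else match hX X h a with
       | Some b => match g' b with Some c => h c | None => b end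
       | None => a end.

Lemma SK {Y} (X : set Y) h (Hh1 : forall x, X x -> ~ X (h x))
  (Hh2 : forall x x', X x -> X x' -> h x = h x' -> x = x') (g g' : Y -> option Y) :
  (forall a b, g a = Some b -> X a /\ X b) ->
  (forall a b, g a = Some b <-> g' b = Some a) ->
  forall a, S_fun X h g' g (S_fun X h g g' a) = a.
Proof.
  intros Hg Hr a. unfold S_fun at 2.
  destruct (excluded_middle_informative (X a)) as [Xa|Xa].
  - destruct (g a) as [b|] eqn:E.
    + destruct (Hg _ _ E) as [_ Xb]. unfold S_fun.
      destruct (excluded_middle_informative (X b)); [|contradiction].
      apply Hr in E; rewrite E; auto.
    + unfold S_fun. destruct (excluded_middle_informative (X (h a))) as [K|_].
      { exfalso; exact (Hh1 a Xa K). }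
      rewrite (hX_h X h Hh2 a Xa). rewrite E; auto.
  - destruct (hX X h a) as [b|] eqn:E.
    + destruct (hX_some X h a b E) as [Xb Hb].
      destruct (g' b) as [c|] eqn:E2.
      * assert (Ec : g c = Some b) by (apply Hr; auto).
        destruct (Hg _ _ Ec) as [Xc _]. unfold S_fun.
        destruct (excluded_middle_informative (X (h c))) as [K|_].
        { exfalso; exact (Hh1 c Xc K). }
        rewrite (hX_h X h Hh2 c Xc). rewrite Ec; auto.
      * unfold S_fun. destruct (excluded_middle_informative (X b)); [|contradiction].
        rewrite E2; auto.
    + unfold S_fun. destruct (excluded_middle_informative (X a)); [contradiction|].
      rewrite E; auto.
Qed.

Section Sdef.
Definition Sperm {Y} (X : set Y) h (Hh1 : forall x, X x -> ~ X (h x))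
  (Hh2 : forall x x', X x -> X x' -> h x = h x' -> x = x') (f : IX X) : perm Y.
Proof.
  refine (Perm (S_fun X h (proj1_sig f) (pinv_fun (proj1_sig f)))
               (S_fun X h (pinv_fun (proj1_sig f)) (proj1_sig f)) _ _).
  - apply SK; auto. exact (proj1 (proj2_sig f)).
    intros a b; symmetry; apply (pinv_some _ _ _ (proj2_sig f)).
  - apply SK; auto.
    + intros a b E. apply (pinv_some _ _ _ (proj2_sig f)) in E.
      destruct (proj1 (proj2_sig f) _ _ E); auto.
    + intros a b. apply (pinv_some _ _ _ (proj2_sig f)).
Defined.
End Sdef.

Lemma hatS {Y} (X : set Y) h Hh1 Hh2 (f : IX X) : hat X (Sperm X h Hh1 Hh2 f) = f.
Proof.
  apply IX_eq; intros a; simpl; unfold hat_fun; simpl; unfold S_fun.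
  destruct (excluded_middle_informative (X a)) as [Xa|Xa].
  - destruct (proj1_sig f a) as [b|] eqn:E.
    + destruct (proj1 (proj2_sig f) _ _ E) as [_ Xb].
      destruct (excluded_middle_informative _) as [_|K]; auto. exfalso; auto.
    + destruct (excluded_middle_informative _) as [[_ K]|_]; auto. exfalso; exact (Hh1 a Xa K).
  - destruct (excluded_middle_informative _) as [[K _]|_]; [contradiction|].
    destruct (proj1_sig f a) as [b|] eqn:E; auto.
    destruct (proj1 (proj2_sig f) _ _ E); contradiction.
Qed.

Lemma S_cont {Y} (X : set Y) h Hh1 Hh2 :
  continuous (tau_pp X) (@pointwise_top Y) (Sperm X h Hh1 Hh2).
Proof.
  pose proof (tpp_top X) as T.
  apply cont_gen; auto. intros V [y [z HV]].
  apply (open_ext _ (fun f => S_fun X h (proj1_sig f) (pinv_fun (proj1_sig f)) y = z)).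
  2:{ intros f; rewrite HV; simpl; tauto. }
  unfold S_fun. destruct (excluded_middle_informative (X y)) as [Xy|Xy].
  - destruct (classic (X z)) as [Xz|Xz].
    + apply (open_ext _ _ _ (tpp_v X y z Xy Xz)); intros f; unfold v_set; split.
      * intros ->; auto.
      * destruct (proj1_sig f y) as [b|]; [congruence|]. intros E; subst; exfalso; exact (Hh1 y Xy Xz).
    + destruct (classic (h y = z)) as [Ez|Ez].
      * apply (open_ext _ _ _ (tpp_w1 X y Xy)); intros f; unfold w1_set; split.
        -- intros ->; auto.
        -- destruct (proj1_sig f y) as [b|] eqn:E; auto. intros ->.
           destruct (proj1 (proj2_sig f) _ _ E); contradiction.
      * apply (open_ext _ _ _ (open_empty _ T)); intros f; split; [tauto|].
        destruct (proj1_sig f y) as [b|] eqn:E; [|tauto]. intros ->.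
        destruct (proj1 (proj2_sig f) _ _ E); contradiction.
  - destruct (hX X h y) as [b|] eqn:Ey.
    + destruct (hX_some X h y b Ey) as [Xb Hb].
      destruct (classic (z = b)) as [->|Nz].
      * apply (open_ext _ _ _ (tpp_w2 X b Xb)); intros f; unfold w2_set; split.
        -- intros K. apply pinv_none in K. rewrite K; auto.
        -- destruct (pinv_fun (proj1_sig f) b) as [c|] eqn:E; [|intros _; apply pinv_none; exact E].
           intros E2. apply (pinv_some _ _ _ (proj2_sig f)) in E.
           destruct (proj1 (proj2_sig f) _ _ E) as [Xc _]. subst. exfalso; exact (Hh1 c Xc Xb).
      * destruct (hX X h z) as [c|] eqn:Ez.
        -- destruct (hX_some X h z c Ez) as [Xc Hc].
           apply (open_ext _ _ _ (tpp_v X c b Xc Xb)); intros f; unfold v_set; split.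
           ++ intros E. apply (pinv_some _ _ _ (proj2_sig f)) in E. rewrite E; auto.
           ++ destruct (pinv_fun (proj1_sig f) b) as [c'|] eqn:E; [|intros; exfalso; auto].
              intros E2. apply (pinv_some _ _ _ (proj2_sig f)) in E.
              destruct (proj1 (proj2_sig f) _ _ E) as [Xc' _].
              assert (c' = c) by (apply Hh2; congruence). subst; auto.
        -- apply (open_ext _ _ _ (open_empty _ T)); intros f; split; [tauto|].
           destruct (pinv_fun (proj1_sig f) b) as [c|] eqn:E; [|intros; exfalso; auto].
           intros E2. apply (pinv_some _ _ _ (proj2_sig f)) in E.
           destruct (proj1 (proj2_sig f) _ _ E) as [Xc _].
           exact (hX_none X h z Ez c Xc E2).
    + apply open_decide; auto.
Qed.

Theorem theorem6p3 (Y : Type) (X : set Y) (hXY : card_le_compl X) :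
  (hausdorff (tau_pp X) /\
   topological_inverse_semigroup (tau_pp X) /\
   continuous ((@pointwise_top Y)) (tau_pp X) (hat X)) /\
  (forall tau : set (set (IX X)),
     is_topology tau -> hausdorff tau ->
     topological_inverse_semigroup tau ->
     continuous ((@pointwise_top Y)) tau (hat X) ->
     forall U, tau U <-> tau_pp X U).
Proof.
  destruct hXY as [h [Hh1 Hh2]].
  split; [split; [apply tpp_haus|split; [split; [apply tpp_mul|apply tpp_inv]|apply hat_cont]]|].
  intros tau T H TIS Hc U; split.
  - intros HU.
    pose proof (S_cont X h Hh1 Hh2 _ (Hc U HU)) as K.
    apply (open_ext _ _ _ K). intros f; simpl. rewrite hatS; tauto.
  - apply dirA; auto.
Qed.
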